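(* Let $(A,\mathfrak{m})$ be a Cohen–Macaulay local ring of dimension $d>0$ with infinite residue field. Let $M$ be a Cohen–Macaulay $A$-module of dimension $1$ with a presentation $G\xrightarrow{\phi}F\to M\to0$ ($F,G$ finite free) such that all entries of $\phi$ lie in $\mathfrak{m}^l$. Suppose $\operatorname{depth}G(A)\ge1$ and $x$ is an $A\oplus M$-superficial element. Then: 1. $(\mathfrak{m}^{i+1}M:_Mx)=\mathfrak{m}^iM$ for $i=0,\dots,l-1$. 2. If moreover $\mathfrak{m}^lM\subseteq xM$, then $\operatorname{depth}G(M)\ge1$.
   Context: $x\in\mathfrak{m}$ is superficial for a module $N$ if there is $c>0$ with $(\mathfrak{m}^nN:_Nx)\cap\mathfrak{m}^cN=\mathfrak{m}^{n-1}N$ for all $n>c$. $G(M)=\bigoplus_n\mathfrak{m}^nM/\mathfrak{m}^{n+1}M$, $G(A)=\bigoplus_n\mathfrak{m}^n/\mathfrak{m}^{n+1}$, depth with respect to the irrelevant maximal ideal of $G(A)$. *)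

(* Defs.v *)
From HB Require Import structures.
From mathcomp Require Import all_boot all_order all_algebra.
Set Implicit Arguments. Unset Strict Implicit. Unset Printing Implicit Defensive.
Import Order.TTheory GRing.Theory Num.Theory.
Local Open Scope ring_scope.

Section CommAlg.
Variable A : comNzRingType.

Definition is_ideal (I : A -> Prop) : Prop :=
  [/\ I 0, (forall a b, I a -> I b -> I (a + b)) & (forall r a, I a -> I (r * a))].

Definition is_prime (P : A -> Prop) : Prop :=
  [/\ is_ideal P, ~ P 1 & (forall a b, P (a * b) -> P a \/ P b)].

Definition is_maximal (m : A -> Prop) : Prop :=
  [/\ is_ideal m, ~ m 1 &
    (forall J : A -> Prop, is_ideal J -> (forall a, m a -> J a) ->
       (forall a, J a <-> m a) \/ J 1)].

Definition ideal_gen (s : seq A) (a : A) : Prop :=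
  exists c : seq A, a = \sum_(i < size s) c`_i * s`_i.

Definition noetherian : Prop :=
  forall I, is_ideal I -> exists s : seq A, forall a, I a <-> ideal_gen s a.

Definition local_ring (m : A -> Prop) : Prop :=
  [/\ noetherian, is_maximal m &
      (forall P, is_maximal P -> forall a, P a <-> m a)].

Definition infinite_residue (m : A -> Prop) : Prop :=
  ~ exists s : seq A, forall a, exists2 b, b \in s & m (a - b).

Fixpoint ipow (m : A -> Prop) (n : nat) : A -> Prop :=
  match n with
  | 0 => fun _ => True
  | n'.+1 => fun a => exists s : seq (A * A),
      (forall p, p \in s -> m p.1 /\ ipow m n' p.2) /\ a = \sum_(p <- s) p.1 * p.2
  end.

Definition prime_chain_above (I : A -> Prop) (n : nat) : Prop :=
  exists P : nat -> A -> Prop,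
    (forall i, (i <= n)%N -> is_prime (P i) /\ (forall a, I a -> P i a)) /\
    (forall i, (i < n)%N -> (forall a, P i a -> P i.+1 a) /\ exists a, P i.+1 a /\ ~ P i a).

Definition krull_dim_above (I : A -> Prop) (d : nat) : Prop :=
  prime_chain_above I d /\ ~ prime_chain_above I d.+1.

Section Modules.
Variable M : lmodType A.

Definition fin_gen : Prop :=
  exists s : seq M, forall v, exists c : seq A, v = \sum_(i < size s) c`_i *: s`_i.

Definition ann (a : A) : Prop := forall v : M, a *: v = 0.

Definition module_dim (d : nat) : Prop := krull_dim_above ann d.

Definition seqM (xs : seq A) (v : M) : Prop :=
  exists ws : seq M, v = \sum_(i < size xs) xs`_i *: ws`_i.

Definition is_reg_seq (m : A -> Prop) (xs : seq A) : Prop :=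
  [/\ (forall i, (i < size xs)%N -> m xs`_i),
      (forall i, (i < size xs)%N -> forall v,
          seqM (take i xs) (xs`_i *: v) -> seqM (take i xs) v) &
      exists v, ~ seqM xs v].

Definition depth_ge (m : A -> Prop) (n : nat) : Prop :=
  exists2 xs : seq A, size xs = n & is_reg_seq m xs.

Definition depth (m : A -> Prop) (d : nat) : Prop :=
  depth_ge m d /\ ~ depth_ge m d.+1.

Definition CM_of_dim (m : A -> Prop) (d : nat) : Prop :=
  module_dim d /\ depth m d.

Definition mpowM (m : A -> Prop) (n : nat) (v : M) : Prop :=
  exists s : seq (A * M),
    (forall p, p \in s -> ipow m n p.1) /\ v = \sum_(p <- s) p.1 *: p.2.

Definition superficial (m : A -> Prop) (x : A) : Prop :=
  m x /\ exists2 c : nat, (0 < c)%N & forall n, (c < n)%N -> forall v : M,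
     (mpowM m n (x *: v) /\ mpowM m c v) <-> mpowM m n.-1 v.

(* Elements of G(M) = (+)_n m^n M / m^(n+1) M are represented by finite
   sequences w with w_i in m^i M; w represents 0 iff w_i in m^(i+1) M. *)
Definition grM_elt (m : A -> Prop) (w : seq M) : Prop := forall i, mpowM m i w`_i.
Definition grM_zero (m : A -> Prop) (w : seq M) : Prop := forall i, mpowM m i.+1 w`_i.
(* g . w = 0 in G(M), for g representing an element of G(A) *)
Definition grM_act_zero (m : A -> Prop) (g : seq A) (w : seq M) : Prop :=
  forall k, mpowM m k.+1 (\sum_(i < k.+1) g`_i *: w`_(k - i)).

(* depth G(M) >= 1 (as a G(A)-module, w.r.t. the irrelevant ideal G(A)_+):
   G(A)_+ contains a G(M)-regular element *)
Definition depth_grM_ge1 (m : A -> Prop) : Prop :=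
  exists g : seq A, [/\ (forall i, ipow m i g`_i), ipow m 1 g`_0 &
     forall w, grM_elt m w -> grM_act_zero m g w -> grM_zero m w].
End Modules.

(* Elements of G(A) likewise represented by sequences g with g_i in m^i. *)
Definition grA_elt (m : A -> Prop) (g : seq A) : Prop := forall i, ipow m i g`_i.
Definition grA_zero (m : A -> Prop) (g : seq A) : Prop := forall i, ipow m i.+1 g`_i.
Definition grA_mul_zero (m : A -> Prop) (g h : seq A) : Prop :=
  forall k, ipow m k.+1 (\sum_(i < k.+1) g`_i * h`_(k - i)).

(* depth G(A) >= 1: the irrelevant ideal G(A)_+ contains a nonzerodivisor *)
Definition depth_grA_ge1 (m : A -> Prop) : Prop :=
  exists g : seq A, [/\ grA_elt m g, ipow m 1 g`_0 &
     forall h, grA_elt m h -> grA_mul_zero m g h -> grA_zero m h].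

Definition presentation_in_pow (M : lmodType A) (m : A -> Prop) (l : nat) : Prop :=
  exists (n p : nat) (Phi : 'M[A]_(p, n)) (pi : {linear 'rV[A]_n -> M}),
    [/\ (forall i j, ipow m l (Phi i j)),
        (forall v : M, exists u, pi u = v) &
        (forall u, pi u = 0 <-> exists w : 'rV[A]_p, u = w *m Phi)].
End CommAlg.

(* Main.v *)
Require Import Defs.
From HB Require Import structures.
From mathcomp Require Import all_boot all_order all_algebra.
From Stdlib Require Import ClassicalEpsilon Classical.
Import GRing.Theory.
Local Open Scope ring_scope.

Set Implicit Arguments. Unset Strict Implicit. Unset Printing Implicit Defensive.

Section Basics.
Variable A : comNzRingType.
Variable m : A -> Prop.
Hypothesis hm : is_ideal m.

Lemma ideal_sum (I : A -> Prop) (T : eqType) (s : seq T) (F : T -> A) :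
  is_ideal I -> (forall t, t \in s -> I (F t)) -> I (\sum_(t <- s) F t).
Proof.
case=> I0 ID _; elim: s => [|t s IH] H; first by rewrite big_nil.
rewrite big_cons; apply: ID; first by apply: H; rewrite inE eqxx.
by apply: IH => u us; apply: H; rewrite inE us orbT.
Qed.

Lemma ipow_ideal n : is_ideal (ipow m n).
Proof.
case: n => [|n] /=; first by [].
split.
- by exists [::]; rewrite big_nil.
- move=> a b [s1 [H1 ->]] [s2 [H2 ->]]; exists (s1 ++ s2); split; last by rewrite big_cat.
  by move=> p; rewrite mem_cat => /orP [] ?; [apply: H1|apply: H2].
- move=> r a [s [H ->]]; exists [seq (r * p.1, p.2) | p <- s]; split.
  + move=> p /mapP [q qs ->] /=; have [Hq1 Hq2] := H q qs; split => //.
    by case: hm => _ _; apply.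
  + by rewrite big_map mulr_sumr; apply: eq_bigr => p _; rewrite mulrA.
Qed.

Lemma ipow0 n : ipow m n 0.
Proof. by case: (ipow_ideal n). Qed.
Lemma ipowD n a b : ipow m n a -> ipow m n b -> ipow m n (a + b).
Proof. by case: (ipow_ideal n) => _ H _; apply: H. Qed.
Lemma ipowMl n r a : ipow m n a -> ipow m n (r * a).
Proof. by case: (ipow_ideal n) => _ _; apply. Qed.
Lemma ipowMr n r a : ipow m n a -> ipow m n (a * r).
Proof. by rewrite mulrC; apply: ipowMl. Qed.
Lemma ipowN n a : ipow m n a -> ipow m n (- a).
Proof. by move=> H; rewrite -mulN1r; apply: ipowMl. Qed.
Lemma ipowB n a b : ipow m n a -> ipow m n b -> ipow m n (a - b).
Proof. by move=> Ha Hb; apply: ipowD => //; apply: ipowN. Qed.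
Lemma ipow_sum n (T : eqType) (s : seq T) (F : T -> A) :
  (forall t, t \in s -> ipow m n (F t)) -> ipow m n (\sum_(t <- s) F t).
Proof. by apply: ideal_sum; apply: ipow_ideal. Qed.

Lemma ipow_mul a b u v : ipow m a u -> ipow m b v -> ipow m (a + b) (u * v).
Proof.
elim: a u => [|a IH] u /=.
  by move=> _ Hv; rewrite add0n; apply: ipowMl.
move=> [s [H ->]] Hv.
exists [seq (p.1, p.2 * v) | p <- s]; split.
- move=> p /mapP [q qs ->] /=; have [Hq1 Hq2] := H q qs; split => //.
  by apply: IH.
- by rewrite big_map mulr_suml; apply: eq_bigr => p _; rewrite mulrA.
Qed.

Lemma ipowS n u : ipow m n.+1 u -> ipow m n u.
Proof.
elim: n u => [|n IH] u //=.
move=> [s [H ->]]; exists s; split => // p ps.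
by have [? ?] := H p ps; split => //; apply: IH.
Qed.

Lemma ipow_mono n p u : (n <= p)%N -> ipow m p u -> ipow m n u.
Proof.
move=> /subnK <-; elim: (p - n)%N => [|k IH] H; first by [].
by apply: IH; apply: ipowS.
Qed.

Lemma ipow1_of u : m u -> ipow m 1 u.
Proof.
by move=> Hu; exists [:: (u, 1)]; split; [move=> p; rewrite inE => /eqP -> |
  rewrite big_cons big_nil mulr1 addr0].
Qed.

Lemma m_of_ipow n u : ipow m n.+1 u -> m u.
Proof.
move=> H; have := ipow_mono (isT : (1 <= n.+1)%N) H.
move=> [s [Hs ->]]; apply: ideal_sum => // p ps.
by have [H1 _] := Hs p ps; rewrite mulrC; case: hm => _ _; apply.
Qed.

Lemma ipowSE n u : ipow m n.+1 u -> exists s : seq (A * A),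
  (forall p, p \in s -> m p.1 /\ ipow m n p.2) /\ u = \sum_(p <- s) p.1 * p.2.
Proof. by []. Qed.

End Basics.

Section Mod.
Variable A : comNzRingType.
Variable m : A -> Prop.
Hypothesis hm : is_ideal m.
Variable V : lmodType A.

Definition subm (P : V -> Prop) :=
  [/\ P 0, (forall u v, P u -> P v -> P (u + v)) & (forall a u, P u -> P (a *: u))].

Lemma subm_sum P (T : eqType) (s : seq T) (F : T -> V) :
  subm P -> (forall t, t \in s -> P (F t)) -> P (\sum_(t <- s) F t).
Proof.
case=> P0 PD _; elim: s => [|t s IH] H; first by rewrite big_nil.
rewrite big_cons; apply: PD; first by apply: H; rewrite inE eqxx.
by apply: IH => u us; apply: H; rewrite inE us orbT.
Qed.

Lemma subm_opp P u : subm P -> P u -> P (- u).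
Proof. by case=> _ _ H Hu; rewrite -scaleN1r; apply: H. Qed.
Lemma subm_sub P u v : subm P -> P u -> P v -> P (u - v).
Proof. by move=> sP Hu Hv; case: (sP) => _ H _; apply: H => //; apply: subm_opp. Qed.

Lemma mpowM_subm n : subm (mpowM m n).
Proof.
split.
- by exists [::]; rewrite big_nil.
- move=> a b [s1 [H1 ->]] [s2 [H2 ->]]; exists (s1 ++ s2); split; last by rewrite big_cat.
  by move=> p; rewrite mem_cat => /orP [] ?; [apply: H1|apply: H2].
- move=> r a [s [H ->]]; exists [seq (r * p.1, p.2) | p <- s]; split.
  + by move=> p /mapP [q qs ->] /=; apply: (ipowMl hm); apply: H.
  + by rewrite big_map scaler_sumr; apply: eq_bigr => p _; rewrite scalerA.
Qed.

Lemma mpowM_elt n r (v : V) : ipow m n r -> mpowM m n (r *: v).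
Proof.
by move=> Hr; exists [:: (r, v)]; split; [move=> p; rewrite inE => /eqP -> |
  rewrite big_cons big_nil addr0].
Qed.

Lemma mpowM_scale a b r (v : V) : ipow m a r -> mpowM m b v -> mpowM m (a + b) (r *: v).
Proof.
move=> Hr [s [H ->]]; rewrite scaler_sumr; apply: subm_sum; first exact: mpowM_subm.
by move=> p ps; rewrite scalerA; apply: mpowM_elt; apply: (ipow_mul hm) => //; apply: H.
Qed.

Lemma mpowM_mono n p (v : V) : (n <= p)%N -> mpowM m p v -> mpowM m n v.
Proof.
move=> le [s [H ->]]; exists s; split => // q qs.
by apply: (ipow_mono le); apply: H.
Qed.

Lemma mpowM0 (v : V) : mpowM m 0 v.
Proof. by rewrite -[v]scale1r; apply: mpowM_elt. Qed.

Lemma mpowM_Sind n (P : V -> Prop) : subm P ->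
  (forall q u, m q -> mpowM m n u -> P (q *: u)) ->
  forall v, mpowM m n.+1 v -> P v.
Proof.
move=> sP H v [s [Hs ->]]; apply: subm_sum => // p ps.
have [t [Ht ->]] := ipowSE (Hs p ps).
rewrite scaler_suml; apply: subm_sum => // q qt.
rewrite -scalerA; apply: H; first by case: (Ht q qt).
by apply: mpowM_elt; case: (Ht q qt).
Qed.

End Mod.

Section ColonA.
Variable A : comNzRingType.
Variable m : A -> Prop.
Hypothesis hm : is_ideal m.
Hypothesis hG : depth_grA_ge1 m.

Lemma grA_step j a : ipow m j a -> (forall b, m b -> ipow m j.+2 (a * b)) ->
  ipow m j.+1 a.
Proof.
move=> Ha Hab; case: hG => g [gelt g0 reg].
pose h := rcons (nseq j (0 : A)) a.
have hE t : h`_t = if t == j then a else 0.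
  rewrite /h nth_rcons size_nseq; case: ltngtP => // lt.
  by rewrite nth_nseq lt.
have := reg h _ _ j; rewrite hE eqxx; apply.
  by move=> t; rewrite hE; case: eqP => [->|_] //; apply: ipow0.
move=> k; apply: ipow_sum => // i _; rewrite hE.
case: eqP => [Ek|_]; last by rewrite mulr0; apply: ipow0.
have ik : (i <= k)%N by rewrite -ltnS.
have kE : k = (i + j)%N by rewrite -Ek subnKC.
move: (gelt i) kE; clear ik Ek; move: (nat_of_ord i) => i0 gi kE; rewrite kE; clear kE; case: i0 gi => [|i'] gi.
  rewrite add0n mulrC; apply: (ipow_mono (p := j.+2)) => //.
  by apply: Hab; apply: (m_of_ipow hm) g0.
have [s [Hs ->]] := ipowSE gi.
rewrite mulr_suml; apply: ipow_sum => // p ps.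
have [p1 p2] := Hs p ps.
rewrite mulrC mulrA.
have -> : (i'.+1 + j).+1 = (j.+2 + i')%N by rewrite addnC -!addSn addnS addSn.
by apply: ipow_mul => //; apply: Hab.
Qed.

Lemma grA_RR k : forall j a, ipow m j a ->
  (forall e, ipow m k e -> ipow m (j + k).+1 (a * e)) -> ipow m j.+1 a.
Proof.
elim: k => [|k IH] j a Ha H.
  by have := H 1 I; rewrite mulr1 addn0.
apply: grA_step => // b mb.
apply: IH; first by rewrite mulrC; apply: (ipow_mul hm (ipow1_of mb) Ha).
move=> e He; rewrite -mulrA.
have -> : (j.+1 + k).+1 = (j + k.+1).+1 by rewrite addSn addnS.
by apply: H; apply: (ipow_mul hm (ipow1_of mb) He).
Qed.

Lemma grA_RR2 n k a : (forall e, ipow m k e -> ipow m (n + k) (a * e)) -> ipow m n a.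
Proof.
move=> H.
suff: forall j, (j <= n)%N -> ipow m j a by apply.
elim=> [|j IH] jn; first by [].
apply: (grA_RR (k:=k)); first by apply: IH; apply: ltnW.
move=> e He; apply: (ipow_mono (n := (j + k).+1) (p := (n + k)%N)).
  by rewrite -addSn leq_add2r.
by apply: H.
Qed.

End ColonA.

Section Prod.
Variable A : comNzRingType.
Variable m : A -> Prop.
Hypothesis hm : is_ideal m.
Variable M : lmodType A.
Notation V := ((A^o * M)%type).

Lemma sum_fst (T : eqType) (s : seq T) (F : T -> V) :
  (\sum_(t <- s) F t).1 = \sum_(t <- s) (F t).1.
Proof. by elim: s => [|t s IH]; rewrite ?big_nil ?big_cons //= IH. Qed.
Lemma sum_snd (T : eqType) (s : seq T) (F : T -> V) :
  (\sum_(t <- s) F t).2 = \sum_(t <- s) (F t).2.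
Proof. by elim: s => [|t s IH]; rewrite ?big_nil ?big_cons //= IH. Qed.

Lemma mpowV_fst n (v : V) : mpowM m n v -> ipow m n v.1.
Proof.
move=> [s [H ->]]; rewrite sum_fst; apply: ipow_sum => // p ps /=.
by apply: (ipowMr hm); apply: H.
Qed.

Lemma mpowV_snd n (v : V) : mpowM m n v -> mpowM m n v.2.
Proof.
move=> [s [H ->]]; rewrite sum_snd; apply: subm_sum; first exact: mpowM_subm.
by move=> p ps /=; apply: mpowM_elt; apply: H.
Qed.

Lemma mpowV_pair n (v : V) : ipow m n v.1 -> mpowM m n v.2 -> mpowM m n v.
Proof.
case: v => a w /= Ha [s [H Hw]].
have -> : ((a, w) : V) = a *: ((1 : A^o), (0 : M)) +
   \sum_(p <- s) p.1 *: (((0 : A^o), p.2) : V).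
  apply/eqP; rewrite xpair_eqE; apply/andP; split; apply/eqP.
  + rewrite sum_fst /= big1 ?addr0; first exact: (esym (mulr1 a)).
    by move=> p _; exact: (mulr0 p.1).
  + by rewrite sum_snd /= scaler0 add0r Hw.
case: (mpowM_subm hm V n) => _ HD _; apply: HD; first by apply: mpowM_elt.
apply: subm_sum; first exact: mpowM_subm.
by move=> p ps; apply: mpowM_elt; apply: H.
Qed.
End Prod.

Section ColonA2.
Variable A : comNzRingType.
Variable m : A -> Prop.
Hypothesis hm : is_ideal m.
Hypothesis hG : depth_grA_ge1 m.
Variable M : lmodType A.
Variable x : A.
Hypothesis hx : superficial ((A^o * M)%type) m x.

Lemma colonA n a : ipow m n.+1 (x * a) -> ipow m n a.
Proof.
move=> Ha; case: hx => mx [c c0 Hc].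
apply: (grA_RR2 hm hG (k := c)) => e He.
pose v : (A^o * M)%type := (a * e, 0).
have := (Hc (n + c).+1 _ v).1; move=> /(_ _) H.
suff /(mpowV_fst hm) : mpowM m (n + c).+1.-1 v by [].
apply: H; first by rewrite ltnS leq_addl.
split; apply: mpowV_pair => //=.
- change (ipow m (n.+1 + c) (x * (a * e))); rewrite mulrA; exact: (ipow_mul hm Ha He).
- by rewrite scaler0; case: (mpowM_subm hm M (n + c).+1).
- by apply: (ipowMl hm).
- by case: (mpowM_subm hm M c).
Qed.

End ColonA2.

Section Part1.
Variable A : comNzRingType.
Variable m : A -> Prop.
Hypothesis hm : is_ideal m.
Variable M : lmodType A.
Variable x : A.
Hypothesis mx : m x.
Hypothesis colon : forall n a, ipow m n.+1 (x * a) -> ipow m n a.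
Variable l : nat.
Hypothesis hP : presentation_in_pow M m l.

Lemma part1 i : (i < l)%N -> forall v : M, mpowM m i.+1 (x *: v) <-> mpowM m i v.
Proof.
move=> il v; split; last first.
  by move=> Hv; apply: (mpowM_scale hm (a := 1)) Hv; apply: ipow1_of.
case: hP => n [p [Phi [pi [HPhi Hsurj Hker]]]].
have lift k (w : M) : mpowM m k w -> exists u, pi u = w /\ forall j, ipow m k (u 0 j).
  move=> [s [Hs ->]]; elim: s Hs => [|q s IH] Hs.
    exists 0; rewrite big_nil linear0; split => // j; rewrite mxE; exact: ipow0.
  have [uq Huq] := Hsurj q.2.
  have [us [Hus1 Hus2]] := IH (fun r rs => Hs r (mem_behead (s := q :: s) rs)).
  exists (q.1 *: uq + us); split.
    by rewrite linearD linearZ_LR /= Huq Hus1 big_cons.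
  move=> j; rewrite !mxE; apply: ipowD => //; apply: (ipowMr hm).
  by apply: Hs; rewrite inE eqxx.
move=> Hxv.
have [u0 Hu0] := Hsurj v.
have [u1 [Hu1 Hu1c]] := lift _ _ Hxv.
have [w Hw] : exists w, x *: u0 - u1 = w *m Phi.
  by apply/Hker; rewrite linearB linearZ_LR /= Hu0 Hu1 subrr.
have Hc j : ipow m i (u0 0 j).
  apply: colon.
  have -> : x * u0 0 j = (x *: u0 - u1) 0 j + u1 0 j by rewrite !mxE subrK.
  apply: ipowD => //; rewrite Hw !mxE; apply: ipow_sum => // k _.
  by apply: (ipowMl hm); apply: (ipow_mono il); apply: HPhi.
rewrite -Hu0 (row_sum_delta u0) linear_sum; apply: subm_sum; first exact: mpowM_subm.
by move=> j _; rewrite linearZ_LR /=; apply: mpowM_elt.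
Qed.

End Part1.

Section Span.
Variable A : comNzRingType.
Variable V : lmodType A.

Fixpoint spn (s : seq V) : V -> Prop :=
  match s with
  | [::] => fun v => v = 0
  | b :: s' => fun v => exists a w, spn s' w /\ v = a *: b + w
  end.

Lemma spn_subm s : subm (spn s).
Proof.
elim: s => [|b s [IH0 IHD IHZ]] /=.
  by split => [//|u v -> ->|a u ->]; rewrite ?addr0 ?scaler0.
split.
- by exists 0, 0; rewrite scale0r addr0.
- move=> u v [a [w [Hw ->]]] [a' [w' [Hw' ->]]]; exists (a + a'), (w + w').
  by split; [apply: IHD | rewrite scalerDl addrACA].
- move=> r u [a [w [Hw ->]]]; exists (r * a), (r *: w).
  by split; [apply: IHZ | rewrite scalerDr scalerA].
Qed.

Lemma spn_mem s b : b \in s -> spn s b.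
Proof.
elim: s => [//|c s IH]; rewrite inE => /orP [/eqP ->|bs] /=.
  by exists 1, 0; split; [case: (spn_subm s) | rewrite scale1r addr0].
by exists 0, b; split; [apply: IH | rewrite scale0r add0r].
Qed.

Lemma spn_min s (P : V -> Prop) : subm P -> (forall b, b \in s -> P b) ->
  forall v, spn s v -> P v.
Proof.
move=> [P0 PD PZ]; elim: s => [|b s IH] Hb v /=; first by move->.
move=> [a [w [Hw ->]]]; apply: PD; first by apply: PZ; apply: Hb; rewrite inE eqxx.
by apply: IH => // c cs; apply: Hb; rewrite inE cs orbT.
Qed.

Lemma spn_cat s1 s2 u v : spn s1 u -> spn s2 v -> spn (s1 ++ s2) (u + v).
Proof.
move=> H1 H2; case: (spn_subm (s1 ++ s2)) => _ HD _; apply: HD.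
  by apply: (spn_min (spn_subm _)) H1 => b bs; apply: spn_mem; rewrite mem_cat bs.
by apply: (spn_min (spn_subm _)) H2 => b bs; apply: spn_mem; rewrite mem_cat bs orbT.
Qed.

End Span.

Section IdealGen.
Variable A : comNzRingType.

Lemma ideal_subm (I : A -> Prop) : is_ideal I -> subm (V := A^o) I.
Proof. by case=> ? ? ?; split. Qed.
Lemma subm_ideal (I : A -> Prop) : subm (V := A^o) I -> is_ideal I.
Proof. by case=> ? ? ?; split. Qed.

Lemma ideal_gen_nth (s : seq A) i : (i < size s)%N -> ideal_gen s s`_i.
Proof.
move=> lt; exists (mkseq (fun j => (j == i)%:R) (size s)).
rewrite (bigD1 (Ordinal lt)) //= nth_mkseq // eqxx mul1r big1 ?addr0 //.
move=> j /eqP ne; rewrite nth_mkseq //; case: eqP => [e|_]; last by rewrite mul0r.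
by case: ne; apply: val_inj.
Qed.

Lemma ideal_gen_span (s : seq A) a : ideal_gen s a -> spn (V := A^o) s a.
Proof.
move=> [c ->].
change (spn (V := A^o) s (\sum_(i < size s) c`_i *: (s`_i : A^o))).
apply: subm_sum; first exact: spn_subm.
move=> i _; case: (spn_subm (V := A^o) s) => _ _ HZ.
by apply: HZ; apply: spn_mem; apply: mem_nth.
Qed.

Lemma noeth_fg : noetherian A -> forall I, is_ideal I ->
  exists cs : seq A, (forall c, c \in cs -> I c) /\ (forall a, I a -> spn (V := A^o) cs a).
Proof.
move=> hN I hI; have [s Hs] := hN I hI; exists s; split.
  by move=> c /(nthP 0) [i lt <-]; apply/Hs; apply: ideal_gen_nth.
by move=> a /Hs; apply: ideal_gen_span.
Qed.
End IdealGen.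

Section Noeth.
Variable A : comNzRingType.
Hypothesis hN : noetherian A.
Variable V : lmodType A.

Lemma noethV (gens : seq V) : forall P, subm P -> (forall v, P v -> spn gens v) ->
  exists t : seq V, (forall b, b \in t -> P b) /\ (forall v, P v -> spn t v).
Proof.
elim: gens => [|b s IH] P sP Hsub.
  by exists [::]; split => // v /Hsub.
pose I a := exists v, P v /\ spn s (v - a *: b).
have hI : is_ideal I.
  case: sP => P0 PD PZ; case: (spn_subm s) => S0 SD SZ.
  split.
  - by exists 0; rewrite scale0r subrr.
  - move=> a a' [v [Pv Sv]] [v' [Pv' Sv']]; exists (v + v'); split; first exact: PD.
    by rewrite scalerDl opprD addrACA; apply: SD.
  - move=> r a [v [Pv Sv]]; exists (r *: v); split; first exact: PZ.
    by rewrite -scalerA -scalerBr; apply: SZ.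
have [cs [Hcs1 Hcs2]] := noeth_fg hN hI.
have [ws [Hws1 Hws2]] : exists ws : seq V, (forall w, w \in ws -> P w) /\
    forall a, spn (V := A^o) cs a -> exists w, spn ws w /\ spn s (w - a *: b).
  elim: cs Hcs1 {Hcs2} => [|c cs IHc] Hc.
    exists [::]; split => // a /= ->; exists 0; split => //.
    by rewrite scale0r subrr; case: (spn_subm s).
  have [vc [Pvc Svc]] := Hc c (mem_head _ _).
  have [ws [Hws1 Hws2]] := IHc (fun c' cs' => Hc c' (mem_behead (s := c :: cs) cs')).
  exists (vc :: ws); split.
    by move=> w; rewrite inE => /orP [/eqP ->|]; [|apply: Hws1].
  move=> a /= [r [a' [Ha' ->]]]; have [w' [Hw'1 Hw'2]] := Hws2 a' Ha'.
  exists (r *: vc + w'); split; first by exists r, w'.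
  have -> : r *: vc + w' - (r *: (c : A^o) + a') *: b = r *: (vc - c *: b) + (w' - a' *: b).
    by rewrite scalerBr scalerA scalerDl opprD addrACA.
  by case: (spn_subm s) => _ SD SZ; apply: SD => //; apply: SZ.
pose P' v := P v /\ spn s v.
have sP' : subm P'.
  case: sP => P0 PD PZ; case: (spn_subm s) => S0 SD SZ.
  by split => [|u v [? ?] [? ?]|a u [? ?]]; split; auto.
have [t' [Ht'1 Ht'2]] := IH P' sP' (fun v (H : P' v) => H.2).
exists (ws ++ t'); split.
  by move=> w; rewrite mem_cat => /orP [/Hws1|/Ht'1 []].
move=> v Pv; have /= [a [w0 [Sw0 Ev]]] := Hsub v Pv.
have Ia : I a by exists v; split => //; rewrite Ev addrC addKr.
have [w [Sw Sw']] := Hws2 a (Hcs2 a Ia).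
have -> : v = w + (v - w) by rewrite addrC subrK.
apply: spn_cat => //; apply: Ht'2; split.
  apply: (subm_sub sP) => //; apply: (spn_min sP Hws1) Sw.
have -> : v - w = (v - a *: b) - (w - a *: b) by rewrite opprB addrA subrK.
by apply: (subm_sub (spn_subm s)) => //; rewrite Ev addrC addKr.
Qed.

Lemma acc (gens : seq V) (C : nat -> V -> Prop) :
  (forall n, subm (C n)) -> (forall n v, C n v -> C n.+1 v) ->
  (forall n v, C n v -> spn gens v) ->
  exists n, forall v, C n.+1 v -> C n v.
Proof.
move=> sC mC Hg.
have mC' n k v : (n <= k)%N -> C n v -> C k v.
  by move=> /subnK <-; elim: (k - n)%N => [//|j IH] Hv; rewrite addSn; apply: mC; apply: IH.
pose U v := exists n, C n v.
have sU : subm U.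
  split.
  - by exists 0%N; case: (sC 0%N).
  - move=> u v [n Hu] [k Hv]; exists (maxn n k); case: (sC (maxn n k)) => _ D _.
    by apply: D; [apply: mC' Hu; apply: leq_maxl | apply: mC' Hv; apply: leq_maxr].
  - by move=> a u [n Hu]; exists n; case: (sC n) => _ _; apply.
have [t [Ht1 Ht2]] := noethV sU (fun v => fun '(ex_intro n Hv) => Hg n v Hv).
have [n Hn] : exists n, forall b, b \in t -> C n b.
  elim: t {Ht2} Ht1 => [|b t IHt] H; first by exists 0%N.
  have [n1 Hn1] := H b (mem_head _ _).
  have [n2 Hn2] := IHt (fun c ct => H c (mem_behead (s := b :: t) ct)).
  exists (maxn n1 n2) => c; rewrite inE => /orP [/eqP ->|ct].
    by apply: mC' Hn1; apply: leq_maxl.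
  by apply: mC' (Hn2 c ct); apply: leq_maxr.
exists n => v Hv; apply: (spn_min (sC n) Hn); apply: Ht2; by exists n.+1.
Qed.

Lemma maximal_elt (gens : seq V) (F : (V -> Prop) -> Prop) P0 :
  F P0 -> (forall P, F P -> subm P /\ forall v, P v -> spn gens v) ->
  exists P, F P /\ forall Q, F Q -> (forall v, P v -> Q v) -> forall v, Q v -> P v.
Proof.
move=> FP0 HF; apply: NNPP => Hno.
have step : forall P : {P | F P}, {Q : {P | F P} |
    (forall v, sval P v -> sval Q v) /\ ~ (forall v, sval Q v -> sval P v)}.
  move=> [P FP]; apply: constructive_indefinite_description.
  apply: NNPP => H; apply: Hno; exists P; split => // Q FQ PQ.
  apply: NNPP => nQP; apply: H; exists (exist _ Q FQ); split => //.
pose ch := fix ch n := match n with 0 => exist _ P0 FP0 | k.+1 => sval (step (ch k)) end.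
have [n Hn] := acc (gens := gens) (C := fun n => sval (ch n))
  (fun n => (HF _ (svalP (ch n))).1)
  (fun n v Hv => (svalP (step (ch n))).1 v Hv)
  (fun n => (HF _ (svalP (ch n))).2).
by apply: (svalP (step (ch n))).2.
Qed.

End Noeth.

Section Local.
Variable A : comNzRingType.
Variable m : A -> Prop.
Hypothesis hL : local_ring m.

Lemma local_ideal : is_ideal m.
Proof. by case: hL => _ [] . Qed.
Lemma local_not1 : ~ m 1.
Proof. by case: hL => _ []. Qed.
Lemma local_noeth : noetherian A.
Proof. by case: hL. Qed.

Lemma span1 (e : A) : spn (V := A^o) [:: 1] e.
Proof. by exists e, 0; split => //; rewrite addr0 /GRing.scale /= mulr1. Qed.

Lemma local_unit a : m a -> exists r, r * (1 - a) = 1.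
Proof.
move=> ma; apply: NNPP => Hnu.
pose F (J : A -> Prop) := [/\ is_ideal J, (forall r, J (r * (1 - a))) & ~ J 1].
pose P0 (e : A) := exists r, e = r * (1 - a).
have FP0 : F P0.
  split.
  - split.
    + by exists 0; rewrite mul0r.
    + by move=> u v [r ->] [r' ->]; exists (r + r'); rewrite mulrDl.
    + by move=> r u [r' ->]; exists (r * r'); rewrite mulrA.
  - by move=> r; exists r.
  - by move=> [r Hr]; apply: Hnu; exists r.
have [P [[PI P1a Pn1] Pmax]] := maximal_elt (V := A^o) local_noeth (gens := [:: 1]) FP0
  (fun J '(And3 hJ _ _) => conj (ideal_subm hJ) (fun v _ => span1 v)).
have Pm : is_maximal P.
  split => // J hJ PJ; apply: NNPP => H.
  apply: (H); left => e; split; last exact: PJ.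
  apply: (Pmax J) => //; split => // [r|J1]; first exact: PJ.
  by apply: H; right.
case: hL => _ [hm _ _] Huniq.
have m1a : m (1 - a) by apply/(Huniq P Pm); have := P1a 1; rewrite mul1r.
apply: local_not1; have -> : 1 = (1 - a) + a by rewrite subrK.
by case: hm => _ D _; apply: D.
Qed.

End Local.

Section IdealPow.
Variable A : comNzRingType.

Lemma ipow_sub (I J : A -> Prop) n : (forall a, I a -> J a) ->
  forall e, ipow I n e -> ipow J n e.
Proof.
move=> IJ; elim: n => [//|n IH] e /= [s [Hs ->]]; exists s; split => // p ps.
by have [? ?] := Hs p ps; split; [apply: IJ|apply: IH].
Qed.

Definition princ (g : A) (u : A) := exists r, u = r * g.
Lemma princ_ideal g : is_ideal (princ g).
Proof.
split.
- by exists 0; rewrite mul0r.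
- by move=> u v [r ->] [r' ->]; exists (r + r'); rewrite mulrDl.
- by move=> r u [r' ->]; exists (r * r'); rewrite mulrA.
Qed.

Lemma ipow_princ g k e : ipow (princ g) k e -> princ (g ^+ k) e.
Proof.
elim: k e => [|k IH] e /=; first by exists e; rewrite expr0 mulr1.
move=> [s [Hs ->]]; apply: ideal_sum; first exact: princ_ideal.
move=> p ps; have [[r1 E1] /IH [r2 E2]] := Hs p ps.
by exists (r1 * r2); rewrite E1 E2 exprS mulrACA.
Qed.

Definition isum (I1 I2 : A -> Prop) (e : A) := exists u w, I1 u /\ I2 w /\ e = u + w.

Lemma isum_ideal I1 I2 : is_ideal I1 -> is_ideal I2 -> is_ideal (isum I1 I2).
Proof.
move=> [a0 aD aM] [b0 bD bM]; split.
- by exists 0, 0; rewrite addr0.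
- move=> u v [u1 [u2 [? [? ->]]]] [v1 [v2 [? [? ->]]]]; exists (u1 + v1), (u2 + v2).
  by split; [|split]; [apply: aD|apply: bD|rewrite addrACA].
- move=> r u [u1 [u2 [? [? ->]]]]; exists (r * u1), (r * u2).
  by split; [|split]; [apply: aM|apply: bM|rewrite mulrDr].
Qed.

Lemma ipow_plus I1 I2 : is_ideal I1 -> is_ideal I2 -> forall p q e,
  ipow (isum I1 I2) (p + q) e -> isum (ipow I1 p) (ipow I2 q) e.
Proof.
move=> h1 h2.
have hJ := isum_ideal h1 h2.
suff: forall n p q, (p + q)%N = n -> forall e, ipow (isum I1 I2) n e ->
  isum (ipow I1 p) (ipow I2 q) e by move=> H p q e; apply: H.
elim=> [|n IH] p q Hn e.
  move: Hn => /eqP; rewrite addn_eq0 => /andP [/eqP -> /eqP ->] _.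
  by exists e, 0; split => //; split; [apply: ipow0|rewrite addr0].
move=> [s [Hs ->]].
apply: ideal_sum; first exact: (isum_ideal (ipow_ideal h1 p) (ipow_ideal h2 q)).
move=> t ts; have [[u1 [w1 [Hu1 [Hw1 ->]]]] Ht2] := Hs t ts.
have X1 : isum (ipow I1 p) (ipow I2 q) (u1 * t.2).
  clear ts Hs; case: p Hn => [|p] Hn.
    by exists (u1 * t.2), 0; split => //; split; [apply: ipow0|rewrite addr0].
  have [u' [w' [Hu' [Hw' ->]]]] := IH p q (esym (eq_add_S _ _ (esym Hn))) _ Ht2.
  exists (u1 * u'), (u1 * w'); rewrite mulrDr; split; last split => //.
    by apply: (ipow_mul h1 (ipow1_of Hu1) Hu').
  by apply: ipowMl.
have X2 : isum (ipow I1 p) (ipow I2 q) (w1 * t.2).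
  clear X1; case: q Hn => [|q] Hn.
    by exists 0, (w1 * t.2); split; [apply: ipow0|split; [|rewrite add0r]].
  have Hn' : (p + q)%N = n by move: Hn; rewrite addnS => -[].
  have [u' [w' [Hu' [Hw' ->]]]] := IH p q Hn' _ Ht2.
  exists (w1 * u'), (w1 * w'); rewrite mulrDr; split; last split => //.
    by apply: ipowMl.
  by apply: (ipow_mul h2 (ipow1_of Hw1) Hw').
rewrite mulrDl; case: (isum_ideal (ipow_ideal h1 p) (ipow_ideal h2 q)) => _ QD _.
exact: QD.
Qed.

Lemma ipow_gens (S : A -> Prop) : is_ideal S -> forall cs : seq A,
  (forall c, c \in cs -> exists k, S (c ^+ k)) ->
  exists n, forall e, ipow (spn (V := A^o) cs) n e -> S e.
Proof.
move=> hS; elim=> [|g cs IH] Hc.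
  exists 1%N => e He.
  have := @m_of_ipow A (spn (V := A^o) [::]) (subm_ideal (spn_subm (V := A^o) [::])) 0%N e He.
  by move=> /= ->; case: hS.
have [k Hk] := Hc g (mem_head _ _).
have [n0 Hn0] := IH (fun c cs' => Hc c (mem_behead (s := g :: cs) cs')).
exists (k + n0)%N => e He.
have He' : ipow (isum (princ g) (spn (V := A^o) cs)) (k + n0) e.
  apply: ipow_sub He => a /= [r [w [Hw ->]]]; exists (r * g), w; split => //.
  by exists r.
have [u [w [Hu [Hw ->]]]] := @ipow_plus (princ g) (spn (V := A^o) cs) (princ_ideal g) (subm_ideal (spn_subm (V := A^o) cs)) k n0 e He'.
case: hS => _ SD SM; apply: SD; last by apply: Hn0.
by have [r ->] := ipow_princ Hu; apply: SM.
Qed.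

End IdealPow.

Section Krull.
Variable A : comNzRingType.
Variable m : A -> Prop.
Hypothesis hL : local_ring m.
Variable M : lmodType A.
Variable gens : seq M.
Hypothesis hg : forall v, spn gens v.

Let hm := local_ideal hL.
Let hN := local_noeth hL.

Definition Nint (v : M) := forall n, mpowM m n v.
Definition mN (v : M) := exists s : seq (A * M),
  (forall p, p \in s -> m p.1 /\ Nint p.2) /\ v = \sum_(p <- s) p.1 *: p.2.

Lemma Nint_subm : subm Nint.
Proof.
split.
- by move=> n; case: (mpowM_subm hm M n).
- by move=> u v Hu Hv n; case: (mpowM_subm hm M n) => _ D _; apply: D.
- by move=> a u Hu n; case: (mpowM_subm hm M n) => _ _ Z; apply: Z.
Qed.

Lemma mN_subm : subm mN.
Proof.
split.
- by exists [::]; rewrite big_nil.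
- move=> a b [s1 [H1 ->]] [s2 [H2 ->]]; exists (s1 ++ s2); split; last by rewrite big_cat.
  by move=> p; rewrite mem_cat => /orP [] ?; [apply: H1|apply: H2].
- move=> r a [s [H ->]]; exists [seq (r * p.1, p.2) | p <- s]; split.
  + move=> p /mapP [q qs ->] /=; have [? ?] := H q qs; split => //.
    by case: hm => _ _; apply.
  + by rewrite big_map scaler_sumr; apply: eq_bigr => p _; rewrite scalerA.
Qed.

Lemma mN_N v : mN v -> Nint v.
Proof.
move=> [s [H ->]]; apply: subm_sum; first exact: Nint_subm.
by move=> p ps; case: Nint_subm => _ _ Z; apply: Z; apply: (H p ps).2.
Qed.

Lemma Nint_in_mN v : Nint v -> mN v.
Proof.
pose F (L : M -> Prop) := subm L /\ forall v, (L v /\ Nint v) <-> mN v.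
have FmN : F mN by split; [exact: mN_subm | move=> w; split => [[]//|H]; split => //; apply: mN_N].
have [L [[sL HL] Lmax]] := maximal_elt hN (gens := gens) FmN
  (fun L '(conj sL _) => conj sL (fun v _ => hg v)).
have mNL w : mN w -> L w by move=> /HL [].
have colon a : m a -> exists k, forall w, L (a ^+ k *: w).
  move=> ma; pose C k w := L (a ^+ k *: w).
  have sC k : subm (C k).
    case: sL => L0 LD LZ; split; rewrite /C.
    - by rewrite scaler0.
    - by move=> u w Hu Hw; rewrite scalerDr; apply: LD.
    - by move=> r u Hu; rewrite scalerA mulrC -scalerA; apply: LZ.
  have mC k w : C k w -> C k.+1 w.
    by rewrite /C exprS -scalerA; case: sL => _ _; apply.
  have [n Hn] := acc hN (gens := gens) sC mC (fun _ w _ => hg w).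
  exists n.
  pose L' w := exists l u, L l /\ w = l + a ^+ n *: u.
  have sL' : subm L'.
    case: sL => L0 LD LZ; split.
    - by exists 0, 0; rewrite scaler0 addr0.
    - move=> u w [l [u' [Hl ->]]] [l2 [w' [Hl2 ->]]]; exists (l + l2), (u' + w').
      by split; [apply: LD|rewrite scalerDr addrACA].
    - move=> r u [l [u' [Hl ->]]]; exists (r *: l), (r *: u').
      by split; [apply: LZ|rewrite scalerDr !scalerA mulrC].
  have LL' w : L w -> L' w by move=> Hw; exists w, 0; rewrite scaler0 addr0.
  have FL' : F L'.
    split => // w; split.
    - move=> [[l [u [Hl Ew]]] Nw].
      have amN : mN (a *: w).
        exists [:: (a, w)]; split; last by rewrite big_cons big_nil addr0.
        by move=> p; rewrite inE => /eqP -> /=.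
      have Lu : L (a ^+ n *: u).
        apply: Hn; rewrite /C exprS -scalerA.
        have -> : a *: (a ^+ n *: u) = a *: w - a *: l by rewrite Ew scalerDr addrC addKr.
        apply: (subm_sub sL); first exact: mNL.
        by case: sL => _ _; apply.
      apply/HL; split => //; rewrite Ew; case: sL => _ D _; exact: D.
    - by move=> H; split; [apply: LL'; apply: mNL|apply: mN_N].
  move=> w; apply: (Lmax L' FL' LL'); exists 0, w; split; [by case: sL|by rewrite add0r].
pose S e := forall w, L (e *: w).
have hS : is_ideal S.
  case: sL => L0 LD LZ; split.
  - by move=> w; rewrite scale0r.
  - by move=> a b Ha Hb w; rewrite scalerDl; apply: LD.
  - by move=> r a Ha w; rewrite -scalerA; apply: LZ; apply: Ha.
have [cs [Hcs1 Hcs2]] := noeth_fg hN hm.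
have [n Hn] := ipow_gens hS (cs := cs) (fun c cc => colon c (Hcs1 c cc)).
move=> Nv; apply/HL; split => //.
have [s [Hs ->]] := Nv n.
apply: subm_sum => // p ps; apply: Hn; apply: ipow_sub (Hs p ps).
exact: Hcs2.
Qed.

(* Nakayama *)
Lemma Krull v : Nint v -> v = 0.
Proof.
have [t [Ht1 Ht2]] := noethV hN Nint_subm (fun w _ => hg w).
elim: t Ht1 Ht2 v => [|b t IH] Ht1 Ht2 v Nv; first by apply: Ht2.
apply: IH => [c ct|w Nw|//]; first by apply: Ht1; rewrite inE ct orbT.
have Nb : Nint b by apply: Ht1; apply: mem_head.
have dec : forall u, mN u -> exists a, m a /\ spn t (u - a *: b).
  move=> u [s [Hs ->]]; elim: s Hs => [|p s IHs] Hs.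
    by exists 0; rewrite big_nil scale0r subrr; split; [case: hm|case: (spn_subm t)].
  have [a [ma Ha]] := IHs (fun q qs => Hs q (mem_behead (s := p :: s) qs)).
  have [mp Np] := Hs p (mem_head _ _).
  have /= [c [w0 [Hw0 Ep]]] := Ht2 _ Np.
  exists (p.1 * c + a); split.
    by case: hm => _ D Z; apply: D => //; rewrite mulrC; apply: Z.
  rewrite big_cons Ep.
  have -> : p.1 *: (c *: b + w0) + \sum_(j <- s) j.1 *: j.2 - (p.1 * c + a) *: b
    = p.1 *: w0 + (\sum_(j <- s) j.1 *: j.2 - a *: b).
    rewrite scalerDr scalerA scalerDl opprD !addrA; congr (_ - _).
    set X := (p.1 * c) *: b; by rewrite (addrC X) (addrAC _ X) addrK.
  by case: (spn_subm t) => _ D Z; apply: D => //; apply: Z.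
have [a [ma Ha]] := dec b (Nint_in_mN Nb).
have [r Hr] := local_unit hL ma.
have Sb : spn t b.
  have -> : b = r *: (b - a *: b) by rewrite -{2}[b]scale1r -scalerBl scalerA Hr scale1r.
  by case: (spn_subm t) => _ _ Z; apply: Z.
have /= [c [w0 [Hw0 ->]]] := Ht2 w Nw.
case: (spn_subm t) => _ D Z; apply: D => //; exact: Z.
Qed.

End Krull.

Lemma fin_gen_spn (A : comNzRingType) (M : lmodType A) :
  fin_gen M -> exists gens : seq M, forall v, spn gens v.
Proof.
move=> [s Hs]; exists s => v; have [c ->] := Hs v.
apply: subm_sum; first exact: spn_subm.
move=> i _; case: (spn_subm s) => _ _ Z; by apply: Z; apply: spn_mem; apply: mem_nth.
Qed.

Lemma ipow_expr (A : comNzRingType) (m : A -> Prop) (hm : is_ideal m) y k :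
  m y -> ipow m k (y ^+ k).
Proof.
move=> my; elim: k => [//|k IH]; rewrite exprS.
exact: (ipow_mul hm (ipow1_of my) IH).
Qed.

Unset Implicit Arguments.
Set Strict Implicit.
Theorem lemma4p5 (A : comNzRingType) (m : A -> Prop) (d : nat)
  (M : lmodType A) (l : nat) (x : A) :
  local_ring m -> infinite_residue m ->
  (0 < d)%N -> CM_of_dim (A^o) m d ->
  fin_gen M -> CM_of_dim M m 1 ->
  presentation_in_pow M m l ->
  depth_grA_ge1 m ->
  superficial ((A^o * M)%type) m x ->
  (forall i, (i < l)%N -> forall v : M, mpowM m i.+1 (x *: v) <-> mpowM m i v) /\
  ((forall v : M, mpowM m l v -> exists w : M, v = x *: w) -> depth_grM_ge1 M m).
Proof.
move=> hL _ _ _ hfg hCMM hP hG hx.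
have hm := local_ideal hL.
have mx : m x by case: hx.
have colon := colonA hm hG hx.
have P1 := part1 hm mx colon hP.
split => // Hsub.
have [gens hg] := fin_gen_spn hfg.
have xreg : forall t : M, x *: t = 0 -> t = 0.
  move=> t xt.
  case: hCMM => _ [[xs sz [Hm Hreg _]] _].
  have x0 : (0 < size xs)%N by rewrite sz.
  set y := xs`_0.
  have my : m y := Hm 0%N x0.
  have yreg (v : M) : y *: v = 0 -> v = 0.
    move=> yv; have := Hreg 0%N x0 v; rewrite take0.
    case=> [|ws ->]; last by rewrite big_ord0.
    by exists [::]; rewrite yv big_ord0.
  case: hx => _ [c c0 Hc].
  have yct : Nint m (y ^+ c *: t).
    move=> n.
    have H := (Hc (n + c).+1 _ ((0 : A^o), y ^+ c *: t)).1.
    apply: (mpowM_mono (leq_addr c n)).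
    apply: (mpowV_snd hm (H _ _)); first by rewrite ltnS leq_addl.
    split.
    - apply: (mpowV_pair hm); first by apply: (ipowMl hm); apply: (ipow0 hm).
      rewrite /=; by rewrite scalerA mulrC -scalerA xt scaler0; case: (mpowM_subm hm M (n + c).+1).
    - apply: (mpowV_pair hm); first exact: (ipow0 hm).
      by apply: mpowM_elt; apply: ipow_expr.
  have := Krull hL hg yct.
  elim: (c) => [|k IH]; first by rewrite expr0 scale1r.
  by rewrite exprS -scalerA => /yreg.
have Q : forall j (v : M), mpowM m (l + j) v ->
    exists w, mpowM m (l + j).-1 w /\ v = x *: w.
  elim=> [|j IH] v.
    rewrite addn0 => Hv; have [w Ew] := Hsub v Hv; exists w; split => //.
    case: (posnP l) => [l0|lpos]; first by rewrite l0; exact: mpowM0.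
    apply/(P1 l.-1); first by rewrite prednK.
    by rewrite prednK // -Ew.
  rewrite addnS; move: v.
  apply: (mpowM_Sind (P := fun v => exists w, mpowM m (l + j).+1.-1 w /\ v = x *: w)).
  - split.
    + by exists 0; split; [case: (mpowM_subm hm M (l + j).+1.-1)|rewrite scaler0].
    + move=> u w [u' [Hu' ->]] [w' [Hw' ->]]; exists (u' + w'); split; last by rewrite scalerDr.
      by case: (mpowM_subm hm M (l + j).+1.-1) => _ D _; apply: D.
    + move=> a u [u' [Hu' ->]]; exists (a *: u'); split; last by rewrite !scalerA mulrC.
      by case: (mpowM_subm hm M (l + j).+1.-1) => _ _ Z; apply: Z.
  - move=> q u mq /IH [w [Hw ->]]; exists (q *: w); split; last by rewrite !scalerA mulrC.
    apply: (mpowM_mono (p := (1 + (l + j).-1)%N)); first by rewrite add1n /= leqSpred.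
    exact: (mpowM_scale hm (ipow1_of mq) Hw).
have key : forall i (z : M), mpowM m i z -> mpowM m i.+2 (x *: z) -> mpowM m i.+1 z.
  move=> i z Hz Hxz.
  case: (ltnP i.+1 l) => [lt|le]; first by apply/(P1 i.+1 lt).
  have E : i.+2 = (l + (i.+2 - l))%N by rewrite subnKC // ltnW.
  move: Hxz; rewrite E => /Q [w [Hw Ew]].
  have -> : z = w.
    by apply/eqP; rewrite -subr_eq0; apply/eqP; apply: xreg; rewrite scalerBr Ew subrr.
  by move: Hw; rewrite -E.
exists [:: 0; x]; split.
- case=> [|[|i]]; [done | exact: ipow1_of | rewrite [_`_ _]/= nth_nil; exact: (ipow0 hm)].
- exact: (ipow0 hm).
move=> w Hw Hact i; apply: key; first exact: Hw.
have := Hact i.+1.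
rewrite big_ord_recl big_ord_recl big1 => [|j _]; last by rewrite /= nth_nil scale0r.
by rewrite /= scale0r add0r addr0 subn1.
Qed.
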